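(* Let $n\in\mathbb{N}$ and let $f_0,f_1,\dots,f_{n-1}$ be complex-valued functions on the unit disc $\mathbb{D}$. For $z\in\mathbb{D}$ and $j=0,\dots,n-1$ define $$D_j(z)=\sum_{k=0}^{n-1}|z|^{jk}f_k(z)\frac{(1-|z|^2)^n}{(1-|z|^{j+2})^k}.$$ Then there exist functions $b_{jk}$ on $\{0<|z|<1\}$, bounded on $\{\frac12<|z|<1\}$, such that for each $0\le k\le n-1$, $$f_k(z)(1-|z|)^{n-k}=\sum_{j=0}^{n-1}b_{jk}(z)D_j(z),\qquad 0<|z|<1.$$ *)

(* Defs.v *)
From Stdlib Require Import Reals List.
From Coquelicot Require Import Coquelicot.
Open Scope R_scope.

Definition csum (n : nat) (g : nat -> C) : C :=
  fold_right Cplus (RtoC 0) (map g (seq 0 n)).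

Definition Dfun (n : nat) (f : nat -> C -> C) (j : nat) (z : C) : C :=
  csum n (fun k =>
    Cmult (RtoC (Cmod z ^ (j * k)))
      (Cmult (f k z)
         (RtoC ((1 - Cmod z ^ 2) ^ n / (1 - Cmod z ^ (j + 2)) ^ k)))).

(* Main.v *)
Require Import Defs.
From Stdlib Require Import Reals List Lra Lia.
From Coquelicot Require Import Coquelicot.
Open Scope R_scope.

Fixpoint ev (l : list C) (t : R) : C :=
  match l with nil => RtoC 0 | c :: l' => Cplus c (Cmult (RtoC t) (ev l' t)) end.

Fixpoint sdiv (t0 : R) (l : list C) : list C :=
  match l with
  | nil => nil
  | c :: l' => match l' with nil => nil | _ :: _ => ev l' t0 :: sdiv t0 l' end
  end.

Fixpoint NL (l : list C) : R := match l with nil => 0 | c :: l' => Cmod c + NL l' end.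

Definition rs (m : nat) (g : nat -> R) : R := fold_right Rplus 0 (map g (seq 0 m)).

Lemma rs_S m g : rs (S m) g = rs m g + g m.
Proof.
  unfold rs. rewrite seq_S, map_app, fold_right_app. simpl.
  generalize (map g (seq 0 m)). induction l; simpl; lra.
Qed.

Lemma rs_ge0 m g : (forall i, 0 <= g i) -> 0 <= rs m g.
Proof. intros H. induction m. unfold rs; simpl; lra. rewrite rs_S. specialize (H m). lra. Qed.

Lemma rs_le m g h : (forall i, (i < m)%nat -> g i <= h i) -> rs m g <= rs m h.
Proof.
  induction m; intros H. unfold rs; simpl; lra.
  rewrite !rs_S. assert (g m <= h m) by (apply H; lia).
  assert (rs m g <= rs m h) by (apply IHm; intros; apply H; lia). lra.
Qed.

Lemma rs_term m g i : (forall i, 0 <= g i) -> (i < m)%nat -> g i <= rs m g.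
Proof.
  intros H. induction m; intros Hi. lia. rewrite rs_S.
  destruct (Nat.eq_dec i m). subst. pose proof (rs_ge0 m g H). lra.
  assert (g i <= rs m g) by (apply IHm; lia). specialize (H m). lra.
Qed.

Lemma rs_plus m g h : rs m (fun i => g i + h i) = rs m g + rs m h.
Proof. induction m. unfold rs; simpl; lra. rewrite !rs_S, IHm. lra. Qed.

Lemma rs_scal m c g : rs m (fun i => c * g i) = c * rs m g.
Proof. induction m. unfold rs; simpl; lra. rewrite !rs_S, IHm. lra. Qed.

Lemma rs_const m c : rs m (fun _ => c) = INR m * c.
Proof. induction m. unfold rs; simpl; lra. rewrite !rs_S, IHm, S_INR. lra. Qed.

Lemma sdiv_eq t0 l t : ev l t = Cplus (ev l t0) (Cmult (RtoC (t - t0)) (ev (sdiv t0 l) t)).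
Proof.
  induction l as [|c l IH]. simpl. apply injective_projections; simpl; ring.
  destruct l as [|d l'].
  - simpl. apply injective_projections; simpl; ring.
  - change (ev (c :: d :: l') t) with (Cplus c (Cmult (RtoC t) (ev (d :: l') t))).
    change (sdiv t0 (c :: d :: l')) with (ev (d :: l') t0 :: sdiv t0 (d :: l')).
    change (ev (c :: d :: l') t0) with (Cplus c (Cmult (RtoC t0) (ev (d :: l') t0))).
    change (ev (ev (d :: l') t0 :: sdiv t0 (d :: l')) t) with
      (Cplus (ev (d :: l') t0) (Cmult (RtoC t) (ev (sdiv t0 (d :: l')) t))).
    rewrite IH. rewrite RtoC_minus. ring.
Qed.

Lemma sdiv_len t0 l : length (sdiv t0 l) = pred (length l).
Proof. induction l as [|c l IH]. reflexivity. destruct l. reflexivity.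
  change (length (ev (c0 :: l) t0 :: sdiv t0 (c0 :: l)) = length (c0 :: l)).
  simpl length in *. rewrite IH. reflexivity. Qed.

Lemma NL_ge0 l : 0 <= NL l.
Proof. induction l; simpl. lra. pose proof (Cmod_ge_0 a). lra. Qed.

Lemma NL_sdiv t0 l : NL l <= Cmod (ev l t0) + (1 + Rabs t0) * NL (sdiv t0 l).
Proof.
  induction l as [|c l IH]. simpl. rewrite Cmod_0. lra.
  destruct l as [|d l'].
  - simpl. replace (Cplus c (Cmult (RtoC t0) (RtoC 0))) with c
      by (apply injective_projections; simpl; ring). lra.
  - change (NL (c :: d :: l')) with (Cmod c + NL (d :: l')).
    change (sdiv t0 (c :: d :: l')) with (ev (d :: l') t0 :: sdiv t0 (d :: l')).
    change (NL (ev (d :: l') t0 :: sdiv t0 (d :: l'))) with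
      (Cmod (ev (d :: l') t0) + NL (sdiv t0 (d :: l'))).
    set (X := ev (d :: l') t0) in *.
    change (ev (c :: d :: l') t0) with (Cplus c (Cmult (RtoC t0) X)).
    assert (Hc : c = Cminus (Cplus c (Cmult (RtoC t0) X)) (Cmult (RtoC t0) X)) by ring.
    assert (Cmod c <= Cmod (Cplus c (Cmult (RtoC t0) X)) + Rabs t0 * Cmod X).
    { rewrite Hc at 1. unfold Cminus. eapply Rle_trans. apply Cmod_triangle.
      rewrite Cmod_opp, Cmod_mult, Cmod_R. lra. }
    pose proof (Rabs_pos t0). pose proof (Cmod_ge_0 X).
    pose proof (NL_ge0 (sdiv t0 (d :: l'))). nra.
Qed.

Lemma NL_nth l k : (k < length l)%nat -> Cmod (nth k l (RtoC 0)) <= NL l.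
Proof.
  revert k; induction l; intros k Hk; simpl in *. lia.
  destruct k. pose proof (NL_ge0 l). lra.
  pose proof (IHl k ltac:(lia)). pose proof (Cmod_ge_0 a). lra.
Qed.

Lemma core m d : 0 < d -> exists K, 0 <= K /\ forall l y,
  length l = m -> (forall i, (i < m)%nat -> Rabs (y i) <= 1) ->
  (forall i j, (i < m)%nat -> (j < m)%nat -> i <> j -> d <= Rabs (y i - y j)) ->
  NL l <= K * rs m (fun j => Cmod (ev l (y j))).
Proof.
  intros Hd. induction m.
  - exists 0. split. lra. intros l y Hl _ _. destruct l; [|discriminate]. simpl. lra.
  - destruct IHm as [K [HK IH]].
    exists (1 + 2 * K * (INR (S m)) / d). split.
    { pose proof (pos_INR (S m)). assert (0 <= 2 * K * INR (S m) / d).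
      { apply Rmult_le_pos. nra. left; apply Rinv_0_lt_compat; lra. } lra. }
    intros l y Hl Hy Hsep.
    set (S0 := rs (S m) (fun j => Cmod (ev l (y j)))).
    set (q := sdiv (y m) l).
    assert (Hq : length q = m) by (unfold q; rewrite sdiv_len, Hl; reflexivity).
    pose proof (IH q y Hq (fun i Hi => Hy i ltac:(lia))
       (fun i j Hi Hj => Hsep i j ltac:(lia) ltac:(lia))) as HQ.
    assert (Hpm : Cmod (ev l (y m)) <= S0).
    { apply (rs_term (S m) (fun j => Cmod (ev l (y j)))). intros; apply Cmod_ge_0. lia. }
    assert (HS0 : 0 <= S0) by (apply rs_ge0; intros; apply Cmod_ge_0).
    assert (Hqj : forall j, (j < m)%nat ->
       Cmod (ev q (y j)) <= / d * (Cmod (ev l (y j)) + Cmod (ev l (y m)))).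
    { intros j Hj. pose proof (sdiv_eq (y m) l (y j)) as E. fold q in E.
      assert (Hs : d <= Rabs (y j - y m)) by (apply Hsep; lia).
      assert (E2 : Cmult (RtoC (y j - y m)) (ev q (y j)) = Cminus (ev l (y j)) (ev l (y m))).
      { rewrite E. ring. }
      assert (Cmod (Cmult (RtoC (y j - y m)) (ev q (y j))) <= Cmod (ev l (y j)) + Cmod (ev l (y m))).
      { rewrite E2. unfold Cminus. eapply Rle_trans. apply Cmod_triangle. rewrite Cmod_opp. lra. }
      rewrite Cmod_mult, Cmod_R in H.
      apply (Rmult_le_reg_l d). lra. rewrite <- Rmult_assoc, Rinv_r by lra.
      pose proof (Cmod_ge_0 (ev q (y j))). nra. }
    assert (Hsq : rs m (fun j => Cmod (ev q (y j))) <= / d * (INR (S m) * S0)).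
    { eapply Rle_trans. apply rs_le. exact Hqj.
      rewrite rs_scal, rs_plus, rs_const. apply Rmult_le_compat_l.
      left; apply Rinv_0_lt_compat; lra.
      assert (rs m (fun j => Cmod (ev l (y j))) <= S0).
      { unfold S0. rewrite rs_S. pose proof (Cmod_ge_0 (ev l (y m))). lra. }
      rewrite S_INR. pose proof (pos_INR m). pose proof (Cmod_ge_0 (ev l (y m))). nra. }
    pose proof (NL_sdiv (y m) l) as Hn. fold q in Hn.
    assert (Hym : Rabs (y m) <= 1) by (apply Hy; lia).
    pose proof (NL_ge0 q).
    assert (NL q <= K * (/ d * (INR (S m) * S0))).
    { eapply Rle_trans. exact HQ. apply Rmult_le_compat_l; assumption. }
    assert (NL l <= S0 + 2 * (K * (/ d * (INR (S m) * S0)))) by nra.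
    unfold Rdiv. fold S0. nra.
Qed.

Lemma ev_map g t n : forall s,
  Cmult (ev (map g (seq s n)) t) (RtoC (t ^ s)) =
  fold_right Cplus (RtoC 0) (map (fun k => Cmult (g k) (RtoC (t ^ k))) (seq s n)).
Proof.
  induction n; intros s. simpl. apply injective_projections; simpl; ring.
  simpl seq. simpl map. simpl fold_right. rewrite <- IHn.
  change (ev (g s :: map g (seq (S s) n)) t) with
    (Cplus (g s) (Cmult (RtoC t) (ev (map g (seq (S s) n)) t))).
  change (t ^ S s) with (t * t ^ s). rewrite RtoC_mult. ring.
Qed.

Lemma fold_scal c (h : nat -> C) (L : list nat) : Cmult c (fold_right Cplus (RtoC 0) (map h L)) =
  fold_right Cplus (RtoC 0) (map (fun k => Cmult c (h k)) L).
Proof. induction L; simpl. apply injective_projections; simpl; ring. rewrite <- IHL. ring. Qed.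

Lemma fold_RtoC c (h : nat -> R) (L : list nat) : fold_right Cplus (RtoC 0) (map (fun k => Cmult c (RtoC (h k))) L) =
  Cmult c (RtoC (fold_right Rplus 0 (map h L))).
Proof. induction L; simpl. apply injective_projections; simpl; ring.
  rewrite IHL, RtoC_plus. ring. Qed.

Lemma nth_map_seq (g : nat -> C) n k : (k < n)%nat -> nth k (map g (seq 0 n)) (RtoC 0) = g k.
Proof.
  intros Hk. rewrite (nth_indep _ _ (g 0%nat)) by (rewrite length_map, length_seq; lia).
  rewrite map_nth, seq_nth by lia. reflexivity.
Qed.

Lemma pow_le_base r j d : 0 <= r <= 1 -> r ^ (j + d) <= r ^ j.
Proof. intros H. rewrite pow_add. pose proof (pow_le r j ltac:(lra)).
  assert (r ^ d <= 1). { induction d. simpl; lra. simpl. pose proof (pow_le r d ltac:(lra)). nra. }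
  nra. Qed.

Lemma bern r m : 0 <= r <= 1 -> 1 - r ^ m <= INR m * (1 - r).
Proof. intros H. induction m. simpl. lra. rewrite S_INR. simpl.
  pose proof (pow_le r m ltac:(lra)). pose proof (pos_INR m).
  assert (r ^ (0 + m) <= r ^ 0) by (apply pow_le_base; lra). simpl in H2. nra. Qed.

Lemma pow_lt1 r m : 0 <= r < 1 -> (1 <= m)%nat -> r ^ m < 1.
Proof. intros H Hm. destruct m. lia. simpl.
  assert (r ^ m <= 1). { replace m with (0 + m)%nat by lia. eapply Rle_trans. apply pow_le_base. lra. simpl; lra. }
  pose proof (pow_le r m ltac:(lra)). nra. Qed.

Definition yy (r : R) (j : nat) : R := r ^ j * (1 - r) / (1 - r ^ (j + 2)).

Lemma yy_gap r j : 0 < r < 1 ->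
  (yy r j - yy r (S j)) * ((1 - r ^ (j + 2)) * (1 - r ^ (j + 3))) = r ^ j * (1 - r) ^ 2.
Proof.
  intros H. unfold yy.
  assert (h1 : r ^ (j + 2) < 1) by (apply pow_lt1; lia || lra).
  assert (h2 : r ^ (S j + 2) < 1) by (apply pow_lt1; lia || lra).
  replace (j + 3)%nat with (S j + 2)%nat by lia.
  replace (r ^ (S j + 2)) with (r ^ 3 * r ^ j) in * by (rewrite <- pow_add; f_equal; lia).
  replace (r ^ (j + 2)) with (r ^ 2 * r ^ j) in * by (rewrite <- pow_add; f_equal; lia).
  change (r ^ S j) with (r * r ^ j). field. lra.
Qed.

Definition dl (n : nat) (r : R) := r ^ n / (INR (S n) * INR (S n)).

Lemma yy_gap_lb n r j : 0 < r < 1 -> (j + 2 <= n)%nat -> dl n r <= yy r j - yy r (S j).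
Proof.
  intros H Hj. pose proof (yy_gap r j H) as E.
  assert (h1 : r ^ (j + 2) < 1) by (apply pow_lt1; lia || lra).
  assert (h2 : r ^ (j + 3) < 1) by (apply pow_lt1; lia || lra).
  pose proof (bern r (j + 2) ltac:(lra)) as B1. pose proof (bern r (j + 3) ltac:(lra)) as B2.
  assert (I1 : INR (j + 2) <= INR (S n)) by (apply le_INR; lia).
  assert (I2 : INR (j + 3) <= INR (S n)) by (apply le_INR; lia).
  assert (hp : r ^ (j + (n - j)) <= r ^ j) by (apply pow_le_base; lra).
  replace (j + (n - j))%nat with n in hp by lia.
  pose proof (pow_le r n ltac:(lra)).
  set (N := INR (S n)) in *. assert (0 < N) by (unfold N; apply lt_0_INR; lia).
  set (g := yy r j - yy r (S j)) in *.
  assert (gpos : 0 < g).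
  { assert (0 < r ^ j) by (apply pow_lt; lra).
    assert (0 < r ^ j * (1 - r) ^ 2) by (apply Rmult_lt_0_compat; nra).
    destruct (Rle_lt_dec g 0); [|lra]. exfalso.
    assert (0 < (1 - r ^ (j + 2)) * (1 - r ^ (j + 3))) by nra. nra. }
  set (Q1 := 1 - r ^ (j + 2)) in *. set (Q2 := 1 - r ^ (j + 3)) in *.
  assert (Q1 * Q2 <= (N * (1 - r)) * (N * (1 - r))).
  { assert (0 <= Q1) by (unfold Q1; lra). assert (0 <= Q2) by (unfold Q2; lra).
    apply Rmult_le_compat; try lra. eapply Rle_trans. exact B1. nra.
    eapply Rle_trans. exact B2. nra. }
  assert (r ^ n * (1 - r) ^ 2 <= g * (N * N) * (1 - r) ^ 2).
  { assert (r ^ n * (1 - r) ^ 2 <= r ^ j * (1 - r) ^ 2) by (apply Rmult_le_compat_r; [nra|lra]).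
    assert (g * (Q1 * Q2) <= g * ((N * (1 - r)) * (N * (1 - r)))) by (apply Rmult_le_compat_l; lra).
    replace (g * (N * N) * (1 - r) ^ 2) with (g * ((N * (1 - r)) * (N * (1 - r)))) by ring. lra. }
  assert (r ^ n <= g * (N * N)).
  { apply (Rmult_le_reg_r ((1 - r) ^ 2)). nra. lra. }
  unfold dl. fold N. apply (Rmult_le_reg_r (N * N)). nra.
  unfold Rdiv. rewrite Rmult_assoc, Rinv_l by nra. lra.
Qed.

Lemma yy_sep n r : 0 < r < 1 -> forall i j, (i < n)%nat -> (j < n)%nat -> i <> j ->
  dl n r <= Rabs (yy r i - yy r j).
Proof.
  intros H.
  assert (D0 : 0 <= dl n r).
  { unfold dl. apply Rmult_le_pos. apply pow_le; lra. left. apply Rinv_0_lt_compat.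
    assert (0 < INR (S n)) by (apply lt_0_INR; lia). nra. }
  assert (Hc : forall dd i, (i + dd + 1 < n)%nat -> dl n r <= yy r i - yy r (i + dd + 1)).
  {
    induction dd; intros i Hi.
    - replace (i + 0 + 1)%nat with (S i) by lia. apply yy_gap_lb; lia || lra.
    - pose proof (IHdd i ltac:(lia)).
      pose proof (yy_gap_lb n r (i + dd + 1) H ltac:(lia)).
      replace (i + S dd + 1)%nat with (S (i + dd + 1)) by lia. lra. }
  intros i j Hi Hj Hij.
  destruct (Nat.lt_ge_cases i j).
  - pose proof (Hc (j - i - 1)%nat i ltac:(lia)) as HH. replace (i + (j - i - 1) + 1)%nat with j in HH by lia.
    rewrite Rabs_right; lra.
  - pose proof (Hc (i - j - 1)%nat j ltac:(lia)) as HH. replace (j + (i - j - 1) + 1)%nat with i in HH by lia.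
    rewrite Rabs_left1; lra.
Qed.

Lemma yy_le1 r i : 0 < r < 1 -> Rabs (yy r i) <= 1.
Proof.
  intros H. unfold yy.
  assert (h1 : r ^ (i + 2) < 1) by (apply pow_lt1; lia || lra).
  assert (hp : r ^ (i + 2) <= r ^ 1) by (replace (i + 2)%nat with (1 + (i + 1))%nat by lia; apply pow_le_base; lra).
  assert (hq : r ^ (0 + i) <= r ^ 0) by (apply pow_le_base; lra). simpl in hp, hq.
  pose proof (pow_le r i ltac:(lra)).
  rewrite Rabs_right.
  - apply (Rmult_le_reg_r (1 - r ^ (i + 2))). lra. unfold Rdiv.
    rewrite Rmult_assoc, Rinv_l by lra. nra.
  - apply Rle_ge. apply Rmult_le_pos. nra. left; apply Rinv_0_lt_compat; lra.
Qed.

Definition aa n (f : nat -> C -> C) z k := Cmult (f k z) (RtoC ((1 - Cmod z) ^ (n - k))).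
Definition ll n f z := map (aa n f z) (seq 0 n).
Definition SS n f z := rs n (fun i => Cmod (Dfun n f i z)).

Lemma real_id r j k n : 0 < r < 1 -> (k < n)%nat ->
  r ^ (j * k) * ((1 - r ^ 2) ^ n / (1 - r ^ (j + 2)) ^ k) =
  (1 + r) ^ n * ((1 - r) ^ (n - k) * (r ^ j * (1 - r) / (1 - r ^ (j + 2))) ^ k).
Proof.
  intros H Hk.
  assert (h1 : r ^ (j + 2) < 1) by (apply pow_lt1; lia || lra).
  rewrite pow_mult.
  assert (E : (1 - r) ^ n = (1 - r) ^ (n - k) * (1 - r) ^ k) by (rewrite <- pow_add; f_equal; lia).
  replace (1 - r ^ 2) with ((1 - r) * (1 + r)) by ring.
  rewrite Rpow_mult_distr, E.
  set (Q := 1 - r ^ (j + 2)) in *. set (X := r ^ j).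
  assert (Q <> 0) by (unfold Q; lra).
  unfold Rdiv. rewrite !Rpow_mult_distr, pow_inv. field. apply pow_nonzero. auto.
Qed.

Lemma Dfun_eq n f z j : 0 < Cmod z < 1 ->
  Dfun n f j z = Cmult (RtoC ((1 + Cmod z) ^ n)) (ev (ll n f z) (yy (Cmod z) j)).
Proof.
  intros H. unfold Dfun, csum, ll.
  set (r := Cmod z) in *.
  rewrite <- (Cmult_1_r (ev _ _)).
  replace (RtoC 1) with (RtoC (yy r j ^ 0)) by reflexivity.
  rewrite ev_map, fold_scal. f_equal. apply map_ext_in. intros k Hk.
  apply in_seq in Hk.
  pose proof (real_id r j k n H ltac:(lia)) as E.
  unfold aa. fold r. unfold yy.
  transitivity (Cmult (f k z) (RtoC (r ^ (j * k) * ((1 - r ^ 2) ^ n / (1 - r ^ (j + 2)) ^ k)))).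
  { rewrite RtoC_mult. ring. }
  rewrite E. rewrite !RtoC_mult. ring.
Qed.

Lemma bound_a n f z d K : 0 < Cmod z < 1 -> d <= dl n (Cmod z) -> 0 <= K ->
  (forall l y,
  length l = n -> (forall i, (i < n)%nat -> Rabs (y i) <= 1) ->
  (forall i j, (i < n)%nat -> (j < n)%nat -> i <> j -> d <= Rabs (y i - y j)) ->
  NL l <= K * rs n (fun j => Cmod (ev l (y j)))) ->
  forall k, (k < n)%nat -> Cmod (aa n f z k) <= K * SS n f z.
Proof.
  intros Hz Hd HK HC k Hk.
  assert (Hlen : length (ll n f z) = n) by (unfold ll; rewrite length_map, length_seq; auto).
  pose proof (NL_nth (ll n f z) k ltac:(lia)) as H1.
  unfold ll in H1 at 1. rewrite nth_map_seq in H1 by auto.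
  eapply Rle_trans. exact H1.
  eapply Rle_trans. apply (HC (ll n f z) (yy (Cmod z)) Hlen).
  - intros; apply yy_le1; auto.
  - intros i j Hi Hj Hij. eapply Rle_trans. exact Hd. apply yy_sep; auto.
  - apply Rmult_le_compat_l. auto. apply rs_le. intros j Hj.
    rewrite (Dfun_eq n f z j Hz), Cmod_mult, Cmod_R.
    assert (1 <= (1 + Cmod z) ^ n) by (apply pow_R1_Rle; lra).
    rewrite Rabs_right by lra. pose proof (Cmod_ge_0 (ev (ll n f z) (yy (Cmod z) j))). nra.
Qed.

Lemma dl_pos n r : 0 < r -> 0 < dl n r.
Proof. intros H. unfold dl. apply Rmult_lt_0_compat. apply pow_lt; auto.
  apply Rinv_0_lt_compat. assert (0 < INR (S n)) by (apply lt_0_INR; lia). nra. Qed.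

Lemma dl_mono n r s : 0 <= r <= s -> dl n r <= dl n s.
Proof. intros H. unfold dl. apply Rmult_le_compat_r.
  left; apply Rinv_0_lt_compat. assert (0 < INR (S n)) by (apply lt_0_INR; lia). nra.
  apply pow_incr; auto. Qed.

Theorem lemma2p6 (n : nat) (f : nat -> C -> C) :
  exists b : nat -> nat -> C -> C,
    (forall j k : nat, (j < n)%nat -> (k < n)%nat ->
       exists M : R, forall z : C, 1/2 < Cmod z < 1 -> Cmod (b j k z) <= M) /\
    (forall k : nat, (k < n)%nat ->
       forall z : C, 0 < Cmod z < 1 ->
         Cmult (f k z) (RtoC ((1 - Cmod z) ^ (n - k))) =
         csum n (fun j => Cmult (b j k z) (Dfun n f j z))).
Proof.
  destruct (core n (dl n (1/2)) (dl_pos n (1/2) ltac:(lra))) as [K0 [HK0 HC0]].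
  exists (fun j k z => Cmult (aa n f z k) (Cmult (Cconj (Dfun n f j z))
            (RtoC (/ Cmod (Dfun n f j z) * / SS n f z)))).
  split.
  - intros j k Hj Hk. exists K0. intros z Hz.
    assert (Hz' : 0 < Cmod z < 1) by lra.
    pose proof (bound_a n f z (dl n (1/2)) K0 Hz' (dl_mono n (1/2) (Cmod z) ltac:(lra)) HK0 HC0 k Hk) as Ha.
    set (D := Dfun n f j z). set (S := SS n f z) in *.
    assert (HS : 0 <= S) by (apply rs_ge0; intros; apply Cmod_ge_0).
    rewrite !Cmod_mult, Cmod_conj, Cmod_R.
    pose proof (Cmod_ge_0 (aa n f z k)). pose proof (Cmod_ge_0 D).
    destruct (Req_dec S 0) as [E|E].
    + rewrite E, Rinv_0, Rmult_0_r, Rabs_R0. lra.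
    + destruct (Req_dec (Cmod D) 0) as [E2|E2].
      * rewrite E2. nra.
      * rewrite Rabs_right.
        2:{ apply Rle_ge, Rmult_le_pos; left; apply Rinv_0_lt_compat; lra. }
        replace (Cmod D * (/ Cmod D * / S)) with (/ S) by (field; lra).
        apply (Rmult_le_reg_r S). lra.
        rewrite Rmult_assoc, Rinv_l by lra. lra.
  - intros k Hk z Hz.
    change (Cmult (f k z) (RtoC ((1 - Cmod z) ^ (n - k)))) with (aa n f z k).
    unfold csum.
    rewrite (map_ext (fun j => Cmult (Cmult (aa n f z k) (Cmult (Cconj (Dfun n f j z))
            (RtoC (/ Cmod (Dfun n f j z) * / SS n f z)))) (Dfun n f j z))
      (fun j => Cmult (aa n f z k) (RtoC (/ SS n f z * Cmod (Dfun n f j z))))).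
    2:{ intros j. set (D := Dfun n f j z). set (S := SS n f z).
        transitivity (Cmult (aa n f z k) (Cmult (Cmult D (Cconj D)) (RtoC (/ Cmod D * / S)))).
        { ring. }
        rewrite <- Cmod2_conj, <- RtoC_mult. f_equal. f_equal.
        destruct (Req_dec (Cmod D) 0) as [E|E].
        { rewrite E. rewrite Rinv_0. ring. }
        { replace (Cmod D ^ 2 * (/ Cmod D * / S)) with ((Cmod D ^ 2 * / Cmod D) * / S) by ring.
          replace (Cmod D ^ 2 * / Cmod D) with (Cmod D) by (field; auto). ring. } }
    rewrite fold_RtoC. change (fold_right Rplus 0 (map (fun j => / SS n f z * Cmod (Dfun n f j z)) (seq 0 n)))
      with (rs n (fun j => / SS n f z * Cmod (Dfun n f j z))).
    rewrite rs_scal. fold (SS n f z).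
    destruct (Req_dec (SS n f z) 0) as [E|E].
    + destruct (core n (dl n (Cmod z)) (dl_pos n (Cmod z) ltac:(lra))) as [K [HK HC]].
      pose proof (bound_a n f z (dl n (Cmod z)) K Hz (Rle_refl _) HK HC k Hk) as Ha.
      rewrite E, Rmult_0_r in Ha.
      assert (aa n f z k = RtoC 0).
      { apply Cmod_eq_0. pose proof (Cmod_ge_0 (aa n f z k)). lra. }
      rewrite H. ring.
    + rewrite Rinv_l by auto. ring.
Qed.
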